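(* There is an absolute constant $c>0$ such that the following holds. Let $\mathcal{F}$ be a finite class of functions $\mathcal{S}\times\mathcal{A}\to[0,V_{\max}]$ and $\Pi$ a finite class of policies. Suppose that for every $\pi\in\Pi$: (i) $\mathcal{T}^\pi f\in\mathcal{F}$ for all $f\in\mathcal{F}$, and (ii) $C_\pi:=\|d^\pi/d^D\|_\infty<\infty$. Let $\mathcal{D}$ consist of $n$ i.i.d. samples from $D$, and for each $\pi\in\Pi$ let $\hat f^\pi\in\arg\min_{f\in\mathcal{F}}\widehat{\mathcal{E}}(f;\pi)$. Let $\hat\pi\in\arg\max_{\pi\in\Pi}J_{\hat f^\pi}(\pi)$. Then for any $\delta\in(0,1)$, with probability at least $1-\delta$, for every $\pi_{\mathrm{cp}}\in\Pi$, $$J(\pi_{\mathrm{cp}})-J(\hat\pi)\le c\,\frac{V_{\max}}{1-\gamma}\sqrt{\frac{(\max_{\pi\in\Pi}C_\pi)\log(|\mathcal{F}||\Pi|/\delta)}{n}}.$$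
   Context: MDP $(\mathcal{S},\mathcal{A},P,R,\gamma,d_0)$ with finite $\mathcal{S},\mathcal{A}$, deterministic reward $R:\mathcal{S}\times\mathcal{A}\to[0,R_{\max}]$, $\gamma\in[0,1)$, $V_{\max}=R_{\max}/(1-\gamma)$. For a policy $\pi$: $J(\pi)=\mathbb{E}_\pi[\sum_t\gamma^tr_t]$; $f(s,\pi)=\sum_a\pi(a\mid s)f(s,a)$; $J_f(\pi)=\mathbb{E}_{s\sim d_0}[f(s,\pi)]$; $(\mathcal{T}^\pi f)(s,a)=R(s,a)+\gamma\mathbb{E}_{s'\sim P(\cdot\mid s,a)}[f(s',\pi)]$; $d^\pi(s,a)=(1-\gamma)\sum_{t\ge0}\gamma^t\Pr_\pi[s_t=s,a_t=a]$. Data distribution $d^D\in\Delta(\mathcal{S}\times\mathcal{A})$; $D$ is the distribution of $(s,a,r,s')$ with $(s,a)\sim d^D$, $r=R(s,a)$, $s'\sim P(\cdot\mid s,a)$. $\|d^\pi/d^D\|_\infty=\max_{s,a}d^\pi(s,a)/d^D(s,a)$ ($0/0=0$, nonzero$/0=\infty$). Empirical losses on dataset $\mathcal{D}$: $\widehat{\mathcal{L}}(f';f,\pi)=\frac{1}{|\mathcal{D}|}\sum_{(s,a,r,s')\in\mathcal{D}}(f'(s,a)-r-\gamma f(s',\pi))^2$ and $\widehat{\mathcal{E}}(f;\pi)=\max_{g\in\mathcal{F}}\big[\widehat{\mathcal{L}}(f;f,\pi)-\widehat{\mathcal{L}}(g;f,\pi)\big]$. Ties in argmin/argmax are broken arbitrarily.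 *)

(* Defs.v *)
From mathcomp Require Import all_boot all_order all_algebra.
From mathcomp Require Import all_classical all_reals.
From mathcomp Require Import topology normedtype sequences exp.
Set Implicit Arguments. Unset Strict Implicit. Unset Printing Implicit Defensive.
Import Order.TTheory GRing.Theory Num.Theory.
Import numFieldNormedType.Exports.
Local Open Scope ring_scope.

(* A (stationary, stochastic) policy is
   pi : {ffun S * A -> R} with pi (s,a) = pi(a|s).  Transition P s a s' = P(s'|s,a). *)

Section MDP.
Variables (R : realType) (S A : finType).

Definition is_distr (T : finType) (p : T -> R) : Prop :=
  (forall x, 0 <= p x) /\ \sum_(x : T) p x = 1.

Definition is_policy (pi : {ffun S * A -> R}) : Prop :=
  forall s, is_distr (fun a => pi (s, a)).

Definition fpol (f pi : {ffun S * A -> R}) (s : S) : R :=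
  \sum_(a : A) pi (s, a) * f (s, a).

Definition Jf (d0 : S -> R) (f pi : {ffun S * A -> R}) : R :=
  \sum_(s : S) d0 s * fpol f pi s.

Definition bellman (Rw : S -> A -> R) (P : S -> A -> S -> R) (gamma : R)
  (pi f : {ffun S * A -> R}) : {ffun S * A -> R} :=
  [ffun sa => Rw sa.1 sa.2 + gamma * \sum_(s' : S) P sa.1 sa.2 s' * fpol f pi s'].

Fixpoint state_distr (P : S -> A -> S -> R) (d0 : S -> R)
  (pi : {ffun S * A -> R}) (t : nat) : S -> R :=
  match t with
  | 0 => d0
  | t'.+1 => fun s' => \sum_(s : S) \sum_(a : A)
              state_distr P d0 pi t' s * pi (s, a) * P s a s'
  end.

Definition sa_distr P d0 pi t (sa : S * A) : R :=
  state_distr P d0 pi t sa.1 * pi sa.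

(* J(pi) = E_pi[ sum_t gamma^t r_t ] = sum_t gamma^t E_pi[r_t] *)
Definition Jret (Rw : S -> A -> R) P d0 (gamma : R) pi : R :=
  limn (series (fun t => gamma ^+ t *
     \sum_(sa : S * A) sa_distr P d0 pi t sa * Rw sa.1 sa.2)).

Definition occupancy P d0 (gamma : R) pi (sa : S * A) : R :=
  (1 - gamma) * limn (series (fun t => gamma ^+ t * sa_distr P d0 pi t sa)).

(* ||d^pi / d^D||_inf with 0/0 = 0 and nonzero/0 = +oo *)
Definition conc_coef P d0 gamma pi (dD : S * A -> R) : \bar R :=
  if [forall sa, (dD sa == 0) ==> (occupancy P d0 gamma pi sa == 0)]
  then (\big[Num.max/0]_(sa : S * A) (occupancy P d0 gamma pi sa / dD sa))%:E
  else +oo%E.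

(* Datasets of n transitions (s, a, s'); the reward r = R(s,a) is deterministic *)
Definition dataset (n : nat) := {ffun 'I_n -> (S * A * S)%type}.

Definition data_prob (P : S -> A -> S -> R) (dD : S * A -> R) n (x : dataset n) : R :=
  \prod_(i < n) (dD ((x i).1.1, (x i).1.2) * P (x i).1.1 (x i).1.2 (x i).2).

Definition emp_loss (Rw : S -> A -> R) (gamma : R) n (x : dataset n)
  (f' f pi : {ffun S * A -> R}) : R :=
  n%:R^-1 * \sum_(i < n)
    (f' ((x i).1.1, (x i).1.2) - Rw (x i).1.1 (x i).1.2
       - gamma * fpol f pi (x i).2) ^+ 2.

Definition emp_err Rw gamma n (x : dataset n) (F : seq {ffun S * A -> R})
  (f pi : {ffun S * A -> R}) : R :=
  \big[Num.max/0]_(g <- F)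
     (emp_loss Rw gamma x f f pi - emp_loss Rw gamma x g f pi).

End MDP.

(* Main.v *)
Require Import Defs.
From mathcomp Require Import all_boot all_order all_algebra.
From mathcomp Require Import all_classical all_reals.
From mathcomp Require Import topology normedtype sequences exp.
From mathcomp Require Import ring lra.
Import Order.TTheory GRing.Theory Num.Theory.
Import numFieldNormedType.Exports.
Local Open Scope ring_scope.

Section Chernoff.
Variable R : realType.

Lemma expR_quad (y : R) : y <= 1/2 -> expR y <= 1 + y + 2 * y^+2.
Proof.
move=> hy.
have h1 := expR_ge1Dx (-y).
have hp : 0 < 1 - y by lra.
have e1 : expR y <= (1 - y)^-1.
  rewrite -[expR y]invrK -expRN lef_pV2 ?posrE ?expR_gt0 //.
apply: (le_trans e1).
rewrite -[X in X <= _]mul1r ler_pdivrMr // .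
have hy2 : 0 <= y^+2 * (1 - 2*y).
  apply: mulr_ge0; first exact: sqr_ge0. lra.
have -> : (1 + y + 2 * y ^+ 2) * (1 - y) = 1 + y^+2 * (1 - 2*y).
  by rewrite !expr2; ring.
lra.
Qed.

Lemma sum_ffun_prod (Z : finType) (n : nat) (G : Z -> R) :
  \sum_(x : {ffun 'I_n -> Z}) \prod_i G (x i) = (\sum_z G z) ^+ n.
Proof.
have := bigA_distr_bigA (fun (_ : 'I_n) (z : Z) => G z).
by move=> /= <-; rewrite prodr_const card_ord.
Qed.

Lemma chernoff (Z : finType) (n : nat) (w X : Z -> R) (B L : R) :
  (forall z, 0 <= w z) -> \sum_z w z = 1 -> 0 < B -> (forall z, -B <= X z) ->
  \sum_z w z * X z ^+ 2 <= 4 * B * \sum_z w z * X z ->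
  \sum_(x : {ffun 'I_n -> Z} |
        \sum_i X (x i) < n%:R * (\sum_z w z * X z) / 2 - 16 * B * L)
     \prod_i w (x i) <= expR (- L).
Proof.
move=> w0 w1 B0 XB X2.
set mu := \sum_z w z * X z.
set lam := (16 * B)^-1.
have lam0 : 0 < lam by rewrite invr_gt0; lra.
have lamB : lam * (16 * B) = 1 by rewrite mulVf //; lra.
pose Phi (x : {ffun 'I_n -> Z}) :=
  \prod_i (w (x i) * expR (- lam * X (x i))) * expR (lam * n%:R * mu / 2 - L).
apply: (@le_trans _ _ (\sum_x Phi x)).
  rewrite [X in _ <= X](bigID (fun x : {ffun 'I_n -> Z} =>
     \sum_i X (x i) < n%:R * mu / 2 - 16 * B * L)) /=.
  rewrite -[X in X <= _]addr0; apply: lerD; last first.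
    apply: sumr_ge0 => x _; apply: mulr_ge0; last exact: ltW (expR_gt0 _).
    by apply: prodr_ge0 => i _; apply: mulr_ge0 => //; exact: ltW (expR_gt0 _).
  apply: ler_sum => x hx.
  rewrite /Phi big_split /=.
  rewrite -[_ * _ * expR _]mulrA; apply: (@le_trans _ _ ((\prod_i w (x i)) * 1)); first by rewrite mulr1.
  apply: ler_wpM2l.
    by apply: prodr_ge0 => i _.
  rewrite -expR_sum -expRD.
  have : lam * (\sum_i X (x i)) < lam * (n%:R * mu / 2 - 16 * B * L).
    by rewrite ltr_pM2l.
  have e1 : lam * (n%:R * mu / 2 - 16 * B * L) = lam * n%:R * mu / 2 - L.
    rewrite mulrBr [lam * (16 * B * L)]mulrA lamB mul1r; congr (_ - _); by rewrite !mulrA.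
  have e2 : \sum_i - lam * X (x i) = - (lam * \sum_i X (x i)).
    by rewrite mulr_sumr -sumrN; apply: eq_bigr => i _; rewrite mulNr.
  rewrite e1 e2 => h. apply: le_trans (expR_ge1Dx _). rewrite lerDl. lra.
rewrite /Phi -mulr_suml (@sum_ffun_prod _ _ (fun z => w z * expR (- lam * X z))).
have hE : \sum_z w z * expR (- lam * X z) <= 1 - lam * mu / 2.
  apply: (@le_trans _ _ (\sum_z w z * (1 + (- lam * X z) + 2 * (- lam * X z)^+2))).
    apply: ler_sum => z _; apply: ler_wpM2l => //; apply: expR_quad.
    have := XB z; have : lam * B = 1/16.
      apply: (@mulIf _ 16); first by rewrite pnatr_eq0.
      by rewrite mul1r -mulrA (mulrC B) lamB mulVf // pnatr_eq0.
    move=> hlB hXz.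
    have : lam * (- B) <= lam * X z by rewrite ler_pM2l.
    rewrite mulrN hlB mulNr. lra.
  have -> : \sum_z w z * (1 + - lam * X z + 2 * (- lam * X z) ^+ 2) =
     \sum_z w z - lam * mu + 2 * lam^+2 * \sum_z w z * X z ^+ 2.
    rewrite /mu mulr_sumr mulr_sumr -sumrN -!big_split /=.
    by apply: eq_bigr => z _; rewrite !expr2; ring.
  rewrite w1.
  have : 2 * lam^+2 * \sum_z w z * X z ^+ 2 <= 2 * lam^+2 * (4 * B * mu).
    by apply: ler_wpM2l => //; apply: mulr_ge0 => //; exact: sqr_ge0.
  have -> : 2 * lam ^+ 2 * (4 * B * mu) = lam * mu / 2.
    have -> : 2 * lam ^+ 2 * (4 * B * mu) = lam * mu * (lam * (16 * B)) / 2 * 1 by rewrite !expr2; field.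
    by rewrite lamB mulr1 mulr1.
  lra.
have hE0 : 0 <= \sum_z w z * expR (- lam * X z).
  by apply: sumr_ge0 => z _; apply: mulr_ge0 => //; exact: ltW (expR_gt0 _).
apply: (@le_trans _ _ ((expR (- (lam * mu / 2))) ^+ n * expR (lam * n%:R * mu / 2 - L))).
  apply: ler_wpM2r; first exact: ltW (expR_gt0 _).
  apply: lerXn2r; rewrite ?nnegrE //; first exact: ltW (expR_gt0 _).
  apply: (le_trans hE); exact: expR_ge1Dx.
rewrite -expRM_natl -expRD.
have -> : n%:R * - (lam * mu / 2) + (lam * n%:R * mu / 2 - L) = - L by ring.
by [].
Qed.
End Chernoff.

Module MDPM.
Local Open Scope classical_set_scope.
Local Open Scope ring_scope.
Section MDPfacts.
Variables (R : realType) (S A : finType) (Rw : S -> A -> R)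
  (P : S -> A -> S -> R) (d0 : S -> R) (gamma : R) (pi : {ffun S * A -> R}).
Hypotheses (HP : forall s a, is_distr (P s a)) (Hd0 : is_distr d0)
  (Hpi : is_policy pi) (Hg0 : 0 <= gamma) (Hg1 : gamma < 1).

Lemma sum_pair (F : S * A -> R) : \sum_(sa : S * A) F sa = \sum_s \sum_a F (s, a).
Proof.
rewrite (pair_big xpredT xpredT (fun s a => F (s, a))) /=.
by apply: eq_bigr => -[s a].
Qed.

Lemma sd_ge0 t s : 0 <= state_distr P d0 pi t s.
Proof.
elim: t s => [|t IH] s /=; first exact: Hd0.1.
apply: sumr_ge0 => s1 _; apply: sumr_ge0 => a _.
apply: mulr_ge0; [apply: mulr_ge0 => //; exact: (Hpi s1).1 | exact: (HP s1 a).1].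
Qed.

Lemma sd_sum t : \sum_s state_distr P d0 pi t s = 1.
Proof.
elim: t => [|t IH] /=; first exact: Hd0.2.
rewrite exchange_big /= -IH; apply: eq_bigr => s _.
rewrite exchange_big /=.
rewrite -[RHS]mulr1 -(Hpi s).2 mulr_sumr; apply: eq_bigr => a _.
by rewrite -mulr_sumr (HP s a).2 mulr1.
Qed.

Lemma sa_ge0 t sa : 0 <= sa_distr P d0 pi t sa.
Proof. apply: mulr_ge0; [exact: sd_ge0 | case: sa => s a; exact: (Hpi s).1]. Qed.

Lemma sa_sum t : \sum_sa sa_distr P d0 pi t sa = 1.
Proof.
rewrite sum_pair -(sd_sum t); apply: eq_bigr => s _.
by rewrite /sa_distr /= -mulr_sumr (Hpi s).2 mulr1.
Qed.

Lemma sa_le1 t sa : sa_distr P d0 pi t sa <= 1.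
Proof.
rewrite -(sa_sum t) (bigD1 sa) //= lerDl.
by apply: sumr_ge0 => i _; exact: sa_ge0.
Qed.

Definition Dv (f : {ffun S * A -> R}) t := \sum_s state_distr P d0 pi t s * fpol f pi s.

Lemma Dv_eq f t : Dv f t = \sum_sa sa_distr P d0 pi t sa * f sa.
Proof.
rewrite sum_pair; apply: eq_bigr => s _.
by rewrite /fpol mulr_sumr; apply: eq_bigr => a _; rewrite /sa_distr /= mulrA.
Qed.

Lemma next_eq t (g : S -> R) :
  \sum_sa sa_distr P d0 pi t sa * (\sum_s' P sa.1 sa.2 s' * g s')
  = \sum_s' state_distr P d0 pi t.+1 s' * g s'.
Proof.
rewrite sum_pair /=.
under [RHS]eq_bigr do rewrite mulr_suml.
rewrite [RHS]exchange_big /=; apply: eq_bigr => s _.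
under [RHS]eq_bigr do rewrite mulr_suml.
rewrite [RHS]exchange_big /=; apply: eq_bigr => a _.
rewrite mulr_sumr; apply: eq_bigr => s' _.
by rewrite /sa_distr /= !mulrA.
Qed.

Lemma bell_step (f : {ffun S * A -> R}) t :
  \sum_sa sa_distr P d0 pi t sa * (f sa - bellman Rw P gamma pi f sa)
  = Dv f t - \sum_sa sa_distr P d0 pi t sa * Rw sa.1 sa.2 - gamma * Dv f t.+1.
Proof.
have -> : Dv f t.+1 = \sum_sa sa_distr P d0 pi t sa *
     (\sum_s' P sa.1 sa.2 s' * fpol f pi s') by rewrite next_eq.
rewrite Dv_eq mulr_sumr -!sumrB; apply: eq_bigr => sa _.
rewrite /bellman ffunE; ring.
Qed.

Definition rseq t := gamma ^+ t * \sum_sa sa_distr P d0 pi t sa * Rw sa.1 sa.2.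
Definition aseq (sa : S * A) t := gamma ^+ t * sa_distr P d0 pi t sa.

Lemma series_tele (f : {ffun S * A -> R}) N :
  series (fun t => gamma ^+ t *
     \sum_sa sa_distr P d0 pi t sa * (f sa - bellman Rw P gamma pi f sa)) N
  = Dv f 0 - gamma ^+ N * Dv f N - series rseq N.
Proof.
rewrite /series /=.
elim: N => [|N IH]; first by rewrite !big_geq // expr0 mul1r subrr sub0r oppr0.
rewrite !big_nat_recr //= IH bell_step /rseq exprS; ring.
Qed.

Lemma series_exch (u : S * A -> R) N :
  series (fun t => gamma ^+ t * \sum_sa sa_distr P d0 pi t sa * u sa) N
  = \sum_sa u sa * series (aseq sa) N.
Proof.
rewrite /series /= /aseq.
under eq_bigr do rewrite mulr_sumr.
rewrite exchange_big /=; apply: eq_bigr => sa _.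
rewrite mulr_sumr; apply: eq_bigr => t _; ring.
Qed.

Lemma geo_bound N : series (fun t => gamma ^+ t) N <= (1 - gamma)^-1.
Proof.
have h : (1 - gamma) * series (fun t => gamma ^+ t) N = 1 - gamma ^+ N.
  rewrite /series /=; elim: N => [|N IH]; first by rewrite big_geq // expr0 mulr0 subrr.
  by rewrite big_nat_recr //= mulrDr IH exprS; ring.
have hh := Hg1.
have hp : 0 < 1 - gamma by lra.
rewrite -[X in _ <= X]mulr1 ler_pdivlMl // h lerBlDr lerDl; exact: exprn_ge0.
Qed.

Lemma aseq_cvg sa : cvgn (series (aseq sa)).
Proof.
apply: nondecreasing_is_cvgn.
  apply: nondecreasing_series => t _ _; apply: mulr_ge0; [exact: exprn_ge0|exact: sa_ge0].
exists (1 - gamma)^-1 => _ [N _ <-].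
apply: le_trans (geo_bound N).
rewrite /series /=; apply: ler_sum => t _.
rewrite /aseq -[X in _ <= X]mulr1; apply: ler_wpM2l; [exact: exprn_ge0|exact: sa_le1].
Qed.

Lemma aseq_lim_ge0 sa : 0 <= limn (series (aseq sa)).
Proof.
apply: le_trans (nondecreasing_cvgn_le _ (aseq_cvg sa) 0).
  by rewrite /series /= big_geq.
apply: nondecreasing_series => t _ _; apply: mulr_ge0; [exact: exprn_ge0|exact: sa_ge0].
Qed.


Lemma cvg_sumseq (T : Type) (r : seq T) (u : T -> nat -> R) (l : T -> R) :
  (forall i, u i n @[n --> \oo] --> l i) ->
  (\sum_(i <- r) u i n) @[n --> \oo] --> \sum_(i <- r) l i.
Proof.
move=> h; elim: r => [|i r IH].
  under eq_cvg do rewrite big_nil.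
  rewrite big_nil; exact: cvg_cst.
under eq_cvg do rewrite big_cons.
rewrite big_cons; exact: (cvgD (h i) IH).
Qed.

Lemma Dv_bound (f : {ffun S * A -> R}) N : `|Dv f N| <= \sum_sa `|f sa|.
Proof.
rewrite Dv_eq; apply: le_trans (ler_norm_sum _ _ _) _.
apply: ler_sum => sa _; rewrite normrM (ger0_norm (sa_ge0 _ _)).
rewrite -[X in _ <= X]mul1r; apply: ler_wpM2r; [exact: normr_ge0|exact: sa_le1].
Qed.

Lemma geo_Dv_cvg (f : {ffun S * A -> R}) :
  (gamma ^+ N * Dv f N) @[N --> \oo] --> (0 : R).
Proof.
have hg : `|gamma| < 1 by rewrite ger0_norm //; exact: Hg1.
set M := \sum_sa `|f sa|.
have c1 := cvg_expr hg.
apply: (@squeeze_cvgr _ _ _ _ (fun N => - M * gamma ^+ N) (fun N => M * gamma ^+ N)).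
  apply: nearW => N.
  have h1 : `|gamma ^+ N * Dv f N| <= M * gamma ^+ N.
    rewrite normrM (ger0_norm (exprn_ge0 _ Hg0)) mulrC.
    apply: ler_wpM2r; [exact: exprn_ge0|exact: Dv_bound].
  by move: h1; rewrite ler_norml mulNr.
  by rewrite -(mulr0 (- M)); exact: cvgMl_tmp c1.
by rewrite -(mulr0 M); exact: cvgMl_tmp c1.
Qed.

Lemma pdl (f : {ffun S * A -> R}) :
  Jret Rw P d0 gamma pi = Jf d0 f pi -
    \sum_sa (f sa - bellman Rw P gamma pi f sa) * limn (series (aseq sa)).
Proof.
have Hs : forall N, series rseq N = Dv f 0 - gamma ^+ N * Dv f N -
    \sum_sa (f sa - bellman Rw P gamma pi f sa) * series (aseq sa) N.
  by move=> N; rewrite -series_exch series_tele; ring.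
have -> : Jret Rw P d0 gamma pi = limn (series rseq) by [].
apply: cvg_lim => //.
rewrite (eq_cvg _ _ Hs).
have -> : Jf d0 f pi = Dv f 0 - 0 by rewrite subr0.
apply: cvgB; first apply: cvgB; first exact: cvg_cst.
  exact: geo_Dv_cvg.
apply: cvg_sumseq => sa.
exact: cvgMl_tmp (aseq_cvg sa).
Qed.

Lemma aseq_sum_le : \sum_sa limn (series (aseq sa)) <= (1 - gamma)^-1.
Proof.
have h : (\sum_sa series (aseq sa) n) @[n --> \oo] --> \sum_sa limn (series (aseq sa)).
  by apply: cvg_sumseq => sa; exact: aseq_cvg.
rewrite -(cvg_lim _ h) //.
apply: limr_le; first by apply/cvg_ex; eexists; exact: h.
apply: nearW => N.
have := series_exch (fun _ => 1) N.
under eq_bigr do rewrite mul1r.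
move=> <-.
apply: le_trans (geo_bound N).
by rewrite /series /=; apply: ler_sum => t _; under eq_bigr do rewrite mulr1; rewrite sa_sum mulr1.
Qed.

Lemma occ_eq sa : occupancy P d0 gamma pi sa = (1 - gamma) * limn (series (aseq sa)).
Proof. by []. Qed.

Lemma occ_ge0 sa : 0 <= occupancy P d0 gamma pi sa.
Proof. rewrite occ_eq; apply: mulr_ge0; [have := Hg1; lra | exact: aseq_lim_ge0]. Qed.

Lemma occ_sum_le : \sum_sa occupancy P d0 gamma pi sa <= 1.
Proof.
have hp : 0 < 1 - gamma by have := Hg1; lra.
under eq_bigr do rewrite occ_eq.
rewrite -mulr_sumr; apply: (@le_trans _ _ ((1 - gamma) * (1 - gamma)^-1)).
  apply: ler_wpM2l; [exact: ltW | exact: aseq_sum_le].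
by rewrite mulfV ?lt0r_neq0.
Qed.

End MDPfacts.

Section CS.
Variables (R : realType) (I : finType).

Lemma cs_bound (w u : I -> R) : (forall i, 0 <= w i) -> \sum_i w i <= 1 ->
  `|\sum_i w i * u i| <= Num.sqrt (\sum_i w i * u i ^+ 2).
Proof.
move=> w0 w1.
set m := \sum_i w i * u i.
have E : \sum_i w i * (u i - m) ^+ 2 = \sum_i w i * u i ^+ 2 - 2 * m * m + m ^+ 2 * \sum_i w i.
  have -> : 2 * m * m = \sum_i 2 * m * (w i * u i) by rewrite /m -mulr_sumr.
  have -> : m ^+ 2 * \sum_i w i = \sum_i m ^+ 2 * w i by rewrite mulr_sumr.
  rewrite -sumrB -big_split /=; apply: eq_bigr => i _; ring.
have h0 : 0 <= \sum_i w i * (u i - m) ^+ 2.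
  by apply: sumr_ge0 => i _; apply: mulr_ge0 => //; exact: sqr_ge0.
have hm : 0 <= m ^+ 2 by exact: sqr_ge0.
have h2 : m ^+ 2 * \sum_i w i <= m ^+ 2 by rewrite -[X in _ <= X]mulr1; exact: ler_wpM2l.
have hfin : m ^+ 2 <= \sum_i w i * u i ^+ 2.
  have : m * m = m ^+ 2 by rewrite expr2.
  lra.
rewrite -sqrtr_sqr ler_sqrt //.
apply: le_trans hfin; exact: sqr_ge0.
Qed.

Lemma bigmax_ge0 (F : I -> R) : 0 <= \big[Num.max/0]_i F i.
Proof. by apply: (big_rec (fun x => 0 <= x)) => // i x _ hx; rewrite le_max hx orbT. Qed.

Lemma bigmax_ge (F : I -> R) j : F j <= \big[Num.max/0]_i F i.
Proof. by rewrite (bigD1 j) //= le_max lexx. Qed.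

End CS.

Lemma conc_bound (R : realType) (S A : finType) (P : S -> A -> S -> R) d0 gamma pi (dD : S * A -> R) :
  (forall sa, 0 <= dD sa) -> (conc_coef P d0 gamma pi dD < +oo)%E ->
  0 <= fine (conc_coef P d0 gamma pi dD) /\
  forall sa, occupancy P d0 gamma pi sa <= fine (conc_coef P d0 gamma pi dD) * dD sa.
Proof.
move=> hD; rewrite /conc_coef; case: ifP => [H _|]; last by rewrite ltxx.
rewrite /=; split; first exact: bigmax_ge0.
move=> sa.
have [h0|hne] := eqVneq (dD sa) 0.
  move/forallP: H => /(_ sa); rewrite h0 eqxx /= => /eqP ->; by rewrite mulr0.
have hp : 0 < dD sa by rewrite lt0r hne hD.
rewrite -ler_pdivrMr //; exact: bigmax_ge.
Qed.

Section Perf.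
Variables (R : realType) (S A : finType) (Rw : S -> A -> R)
  (P : S -> A -> S -> R) (d0 : S -> R) (gamma : R) (pi : {ffun S * A -> R})
  (dD : S * A -> R).
Hypotheses (HP : forall s a, is_distr (P s a)) (Hd0 : is_distr d0)
  (Hpi : is_policy pi) (Hg0 : 0 <= gamma) (Hg1 : gamma < 1)
  (HD0 : forall sa, 0 <= dD sa) (Hc : (conc_coef P d0 gamma pi dD < +oo)%E).

Lemma perf (f : {ffun S * A -> R}) :
  `|Jf d0 f pi - Jret Rw P d0 gamma pi| <=
   (1 - gamma)^-1 * Num.sqrt (fine (conc_coef P d0 gamma pi dD) *
      \sum_sa dD sa * (f sa - bellman Rw P gamma pi f sa) ^+ 2).
Proof.
have hp : 0 < 1 - gamma by have := Hg1; lra.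
have [C0 HC] := @conc_bound R S A P d0 gamma pi dD HD0 Hc.
set C := fine _ in C0 HC *.
rewrite (@pdl R S A Rw P d0 gamma pi HP Hd0 Hpi Hg0 Hg1 f).
set u := fun sa => f sa - bellman Rw P gamma pi f sa.
have -> : Jf d0 f pi - (Jf d0 f pi - \sum_sa u sa *
       limn (series (@aseq R S A P d0 gamma pi sa))) =
    (1 - gamma)^-1 * \sum_sa occupancy P d0 gamma pi sa * u sa.
  rewrite opprB addrC subrK mulr_sumr; apply: eq_bigr => sa _.
  by rewrite occ_eq /u mulrA mulKf ?lt0r_neq0 // mulrC.
have hi : 0 <= (1 - gamma)^-1 by rewrite invr_ge0 ltW.
rewrite normrM (ger0_norm hi).
apply: ler_wpM2l => //.
apply: le_trans (@cs_bound R _ _ u (@occ_ge0 R S A P d0 gamma pi HP Hd0 Hpi Hg0 Hg1)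
   (@occ_sum_le R S A P d0 gamma pi HP Hd0 Hpi Hg0 Hg1)) _.
rewrite ler_sqrt; last first.
  apply: mulr_ge0 => //; apply: sumr_ge0 => sa _; apply: mulr_ge0 => //; exact: sqr_ge0.
rewrite mulr_sumr; apply: ler_sum => sa _.
rewrite mulrA; apply: ler_wpM2r; [exact: sqr_ge0 | exact: HC].
Qed.
End Perf.

End MDPM.
Import MDPM.

Section Q.
Variables (R : realType) (S A : finType).

Lemma sum_pair2 (I J : finType) (F : I * J -> R) :
  \sum_(p : I * J) F p = \sum_i \sum_j F (i, j).
Proof.
rewrite (pair_big xpredT xpredT (fun i j => F (i, j))) /=.
by apply: eq_bigr => -[i j].
Qed.

Lemma bigmax_seq_ge (T : eqType) (s : seq T) (F : T -> R) j :
  j \in s -> F j <= \big[Num.max/0]_(i <- s) F i.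
Proof.
elim: s => [//|k s IH]; rewrite inE big_cons => /orP [/eqP ->|hj].
  by rewrite le_max lexx.
by rewrite le_max IH ?orbT.
Qed.

Lemma bigmax_seq_le (T : eqType) (s : seq T) (F : T -> R) B :
  0 <= B -> (forall i, i \in s -> F i <= B) -> \big[Num.max/0]_(i <- s) F i <= B.
Proof.
move=> B0; elim: s => [|k s IH] hs; first by rewrite big_nil.
rewrite big_cons ge_max hs ?mem_head // IH // => i hi.
by apply: hs; rewrite inE hi orbT.
Qed.

Lemma bigmax_seq_ge0 (T : Type) (s : seq T) (F : T -> R) :
  0 <= \big[Num.max/0]_(i <- s) F i.
Proof. by apply: (big_rec (fun x => 0 <= x)) => // i x _ hx; rewrite le_max hx orbT. Qed.

Lemma bigmax_le (I : finType) (F : I -> R) B :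
  0 <= B -> (forall i, F i <= B) -> \big[Num.max/0]_i F i <= B.
Proof.
move=> B0 h; apply: (big_rec (fun x => x <= B)) => // i x _ hx.
by rewrite ge_max h hx.
Qed.

Lemma fpol_bound (f pi : {ffun S * A -> R}) V : is_policy pi ->
  (forall sa, 0 <= f sa <= V) -> forall s, 0 <= fpol f pi s <= V.
Proof.
move=> hpi hf s; apply/andP; split.
  apply: sumr_ge0 => a _; apply: mulr_ge0; [exact: (hpi s).1|by case/andP: (hf (s, a))].
apply: (@le_trans _ _ (\sum_a pi (s, a) * V)).
  apply: ler_sum => a _; apply: ler_wpM2l; [exact: (hpi s).1|by case/andP: (hf (s, a))].
by rewrite -mulr_suml (hpi s).2 mul1r.
Qed.

Definition distf (f g : {ffun S * A -> R}) := \big[Num.max/0]_sa `|f sa - g sa|.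

Lemma distf_ge (f g : {ffun S * A -> R}) sa : `|f sa - g sa| <= distf f g.
Proof. exact: bigmax_ge. Qed.

Lemma contraction (Rw : S -> A -> R) (P : S -> A -> S -> R) gamma pi f g :
  (forall s a, is_distr (P s a)) -> is_policy pi -> 0 <= gamma ->
  distf (bellman Rw P gamma pi f) (bellman Rw P gamma pi g) <= gamma * distf f g.
Proof.
move=> HP hpi hg.
have d0 : 0 <= distf f g by exact: bigmax_ge0.
apply: bigmax_le; first exact: mulr_ge0.
move=> [s a]; rewrite !ffunE /= opprD addrACA subrr add0r -mulrBr -sumrB.
rewrite normrM (ger0_norm hg); apply: ler_wpM2l => //.
apply: le_trans (ler_norm_sum _ _ _) _.
apply: (@le_trans _ _ (\sum_s' P s a s' * distf f g)); last first.
  by rewrite -mulr_suml (HP s a).2 mul1r.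
apply: ler_sum => s' _; rewrite -mulrBr normrM (ger0_norm ((HP s a).1 s')).
apply: ler_wpM2l; first exact: (HP s a).1.
rewrite /fpol -sumrB; apply: le_trans (ler_norm_sum _ _ _) _.
apply: (@le_trans _ _ (\sum_a' pi (s', a') * distf f g)); last first.
  by rewrite -mulr_suml (hpi s').2 mul1r.
apply: ler_sum => a' _; rewrite -mulrBr normrM (ger0_norm ((hpi s').1 a')).
apply: ler_wpM2l; [exact: (hpi s').1|exact: distf_ge].
Qed.

Lemma seq_argmin (T : eqType) (s : seq T) (phi : T -> R) :
  s != [::] -> exists2 x, x \in s & forall y, y \in s -> phi x <= phi y.
Proof.
elim: s => [//|k s IH] _.
case: s IH => [|k2 s'] IH.
  by exists k; rewrite ?mem_head // => y; rewrite inE => /eqP ->.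
have [x hx hmin] := IH isT.
case: (leP (phi k) (phi x)) => h.
  exists k; first exact: mem_head.
  move=> y; rewrite inE => /orP [/eqP ->//|hy]; exact: le_trans h (hmin _ hy).
exists x; first by rewrite inE hx orbT.
move=> y; rewrite inE => /orP [/eqP ->|hy]; [exact: ltW|exact: hmin].
Qed.

Lemma fixed_point (Rw : S -> A -> R) (P : S -> A -> S -> R) gamma pi
  (F : seq {ffun S * A -> R}) :
  (forall s a, is_distr (P s a)) -> is_policy pi -> 0 <= gamma -> gamma < 1 ->
  F != [::] -> (forall f, f \in F -> bellman Rw P gamma pi f \in F) ->
  exists2 Q, Q \in F & bellman Rw P gamma pi Q = Q.
Proof.
move=> HP hpi hg0 hg1 hF hcl.
pose T := bellman Rw P gamma pi.
have [f hf hmin] := @seq_argmin _ F (fun f => distf f (T f)) hF.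
exists f => //.
have h1 := hmin _ (hcl _ hf).
have h2 := contraction Rw P gamma pi f (T f) HP hpi hg0.
have h0 : 0 <= distf f (T f) by exact: bigmax_ge0.
have hz : distf f (T f) <= 0.
  have : distf f (T f) <= gamma * distf f (T f) by apply: le_trans h1 h2.
  nra.
apply/ffunP => sa; apply/eqP; rewrite eq_sym -subr_eq0 -normr_le0.
exact: le_trans (distf_ge _ _ sa) hz.
Qed.

Section Xfacts.
Variables (Rw : S -> A -> R) (P : S -> A -> S -> R) (gamma : R)
  (pi f h : {ffun S * A -> R}) (dD : S * A -> R).

Definition yv (z : S * A * S) := Rw z.1.1 z.1.2 + gamma * fpol f pi z.2.
Definition Xv (z : S * A * S) :=
  (h (z.1.1, z.1.2) - yv z) ^+ 2 - (bellman Rw P gamma pi f (z.1.1, z.1.2) - yv z) ^+ 2.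
Definition muv := \sum_sa dD sa * (h sa - bellman Rw P gamma pi f sa) ^+ 2.
Definition wv (z : S * A * S) := dD (z.1.1, z.1.2) * P z.1.1 z.1.2 z.2.

Lemma emp_diff n (x : dataset S A n) :
  emp_loss Rw gamma x h f pi - emp_loss Rw gamma x (bellman Rw P gamma pi f) f pi
  = n%:R^-1 * \sum_i Xv (x i).
Proof.
rewrite /emp_loss -mulrBr -sumrB; congr (_ * _); apply: eq_bigr => i _.
rewrite /Xv /yv; ring.
Qed.

Hypothesis HP : forall s a, is_distr (P s a).
Hypothesis HD : is_distr dD.

Lemma sum_w : \sum_z wv z = 1.
Proof.
rewrite sum_pair2 -HD.2; apply: eq_bigr => -[s a] _.
by rewrite /wv /= -mulr_sumr (HP s a).2 mulr1.
Qed.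

Lemma inner_X s a :
  \sum_s' P s a s' * Xv (s, a, s') = (h (s, a) - bellman Rw P gamma pi f (s, a)) ^+ 2.
Proof.
set T := bellman Rw P gamma pi f (s, a).
have hT : \sum_s' P s a s' * yv (s, a, s') = T.
  rewrite /T /bellman ffunE /= /yv /=.
  under eq_bigr do rewrite mulrDr.
  rewrite big_split /= -mulr_suml (HP s a).2 mul1r mulr_sumr; congr (_ + _).
  by apply: eq_bigr => s' _; ring.
have -> : \sum_s' P s a s' * Xv (s, a, s') =
   \sum_s' (P s a s' * (h (s, a) ^+ 2 - T ^+ 2) - 2 * (h (s, a) - T) * (P s a s' * yv (s, a, s'))).
  by apply: eq_bigr => s' _; rewrite /Xv /= -/T; ring.
rewrite sumrB -mulr_suml -mulr_sumr hT (HP s a).2; ring.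
Qed.

Lemma mean_X : \sum_z wv z * Xv z = muv.
Proof.
rewrite sum_pair2 /muv; apply: eq_bigr => -[s a] _.
rewrite -inner_X mulr_sumr; apply: eq_bigr => s' _.
by rewrite /wv /= mulrA.
Qed.

Variable V : R.
Hypothesis hh : forall sa, 0 <= h sa <= V.
Hypothesis hTb : forall sa, 0 <= bellman Rw P gamma pi f sa <= V.
Hypothesis hy : forall z, 0 <= yv z <= V.

Lemma low_X z : - V ^+ 2 <= Xv z.
Proof.
rewrite /Xv.
move: (hTb (z.1.1, z.1.2)) (hy z) => /andP [a1 a2] /andP [b1 b2].
set T := bellman _ _ _ _ _ _ in a1 a2 *.
have : 0 <= (h (z.1.1, z.1.2) - yv z) ^+ 2 by exact: sqr_ge0.
rewrite !expr2; nra.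
Qed.

Lemma sq_X : \sum_z wv z * Xv z ^+ 2 <= 4 * V ^+ 2 * \sum_z wv z * Xv z.
Proof.
rewrite mean_X /muv mulr_sumr sum_pair2; apply: ler_sum => -[s a] _.
have -> : 4 * V ^+ 2 * (dD (s, a) * (h (s, a) - bellman Rw P gamma pi f (s, a)) ^+ 2)
  = \sum_s' wv (s, a, s') * (4 * V ^+ 2 * (h (s, a) - bellman Rw P gamma pi f (s, a)) ^+ 2).
  by rewrite -mulr_suml /wv /= -mulr_sumr (HP s a).2 mulr1; ring.
apply: ler_sum => s' _; apply: ler_wpM2l.
  by apply: mulr_ge0; [exact: HD.1|exact: (HP s a).1].
rewrite /Xv /=.
move: (hTb (s, a)) (hy (s, a, s')) (hh (s, a)) => /andP [a1 a2] /andP [b1 b2] /andP [c1 c2].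
set T := bellman _ _ _ _ _ _ in a1 a2 *.
set y := yv _ in b1 b2 *.
set hh0 := h (s, a) in c1 c2 *.
have -> : (hh0 - y) ^+ 2 - (T - y) ^+ 2 = (hh0 - T) * (hh0 + T - 2 * y) by ring.
rewrite exprMn [X in _ <= X]mulrC; apply: ler_wpM2l; first exact: sqr_ge0.
have e1 : hh0 + T - 2 * y <= 2 * V by lra.
have e2 : - (2 * V) <= hh0 + T - 2 * y by lra.
rewrite !expr2; nra.
Qed.

Lemma bad_prob n L : 0 <= V ->
  \sum_(x : dataset S A n | \sum_i Xv (x i) < n%:R * muv / 2 - 16 * V ^+ 2 * L)
     data_prob P dD x <= expR (- L).
Proof.
move=> V0.
have [V00|Vp] := eqVneq V 0.
  rewrite big_pred0; first exact: ltW (expR_gt0 _).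
  have hX : forall z, Xv z = 0.
    move=> z; rewrite /Xv.
    move: (hTb (z.1.1, z.1.2)) (hy z) (hh (z.1.1, z.1.2)); rewrite V00.
    move=> /andP [a1 a2] /andP [b1 b2] /andP [c1 c2].
    have -> : yv z = 0 by apply/le_anti/andP.
    have -> : h (z.1.1, z.1.2) = 0 by apply/le_anti/andP.
    have -> : bellman Rw P gamma pi f (z.1.1, z.1.2) = 0 by apply/le_anti/andP.
    by rewrite subrr.
  have hmu : muv = 0 by rewrite -mean_X; apply: big1 => z _; rewrite hX mulr0.
  move=> x /=; rewrite hmu V00 big1; last by move=> i _; rewrite hX.
  by apply/negbTE; rewrite -leNgt expr2 !(mulr0, mul0r) subrr.
have Bp : 0 < V ^+ 2 by rewrite exprn_gt0 // lt0r Vp.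
have := @chernoff R _ n wv Xv (V ^+ 2) L _ sum_w Bp low_X _.
rewrite mean_X; apply.
- by move=> [[s a] s']; apply: mulr_ge0; [exact: HD.1|exact: (HP s a).1].
- by move: sq_X; rewrite mean_X mulrA.
Qed.

End Xfacts.

End Q.

Lemma sum_or (R : realType) (X : finType) (a b : pred X) (p : X -> R) :
  (forall x, 0 <= p x) ->
  \sum_(x | a x || b x) p x <= \sum_(x | a x) p x + \sum_(x | b x) p x.
Proof.
move=> p0; rewrite !(big_mkcond (fun x => _ || _)) (big_mkcond a) (big_mkcond b) -big_split /=.
apply: ler_sum => x _; case: (a x); case: (b x) => /=; rewrite ?addr0 ?add0r //.
by rewrite lerDl.
Qed.

Lemma union_bound (R : realType) (X : finType) (E : Type) (s : seq E)
  (B : E -> X -> bool) (p : X -> R) :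
  (forall x, 0 <= p x) ->
  \sum_(x | ~~ all (fun e => ~~ B e x) s) p x <= \sum_(e <- s) \sum_(x | B e x) p x.
Proof.
move=> p0; elim: s => [|e s IH].
  by rewrite big_nil big_pred0.
rewrite big_cons.
have -> : \sum_(x | ~~ all (fun e0 => ~~ B e0 x) (e :: s)) p x =
   \sum_(x | B e x || ~~ all (fun e0 => ~~ B e0 x) s) p x.
  by apply: eq_bigl => x /=; rewrite negb_and negbK.
apply: le_trans (@sum_or R X _ _ p p0) _.
exact: lerD.
Qed.

Lemma sum_const_seq (R : realType) (E : Type) (c : R) (s : seq E) :
  \sum_(e <- s) c = c * (size s)%:R.
Proof.
elim: s => [|e s IH]; first by rewrite big_nil mulr0.
by rewrite big_cons IH /= -addn1 natrD mulrDr mulr1 addrC.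
Qed.

Theorem theorem1 :
  exists c : nat, (0 < c)%N /\
  forall (R : realType) (S A : finType)
    (Rw : S -> A -> R) (Rmax : R) (P : S -> A -> S -> R) (gamma : R)
    (d0 : S -> R) (dD : S * A -> R)
    (F : seq {ffun S * A -> R}) (Pi : seq {ffun S * A -> R})
    (n : nat) (delta : R),
    (forall s a, 0 <= Rw s a <= Rmax) ->
    (forall s a, is_distr (P s a)) ->
    0 <= gamma < 1 ->
    is_distr d0 ->
    is_distr dD ->
    uniq F -> uniq Pi ->
    (forall f, f \in F -> forall sa, 0 <= f sa <= Rmax / (1 - gamma)) ->
    (forall pi, pi \in Pi -> is_policy pi) ->
    (forall pi, pi \in Pi -> forall f, f \in F -> bellman Rw P gamma pi f \in F) ->
    (forall pi, pi \in Pi -> (conc_coef P d0 gamma pi dD < +oo)%E) ->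
    (0 < n)%N ->
    0 < delta < 1 ->
    forall (fhat : dataset S A n -> {ffun S * A -> R} -> {ffun S * A -> R})
           (pihat : dataset S A n -> {ffun S * A -> R}),
    (forall x pi, pi \in Pi ->
        fhat x pi \in F /\
        forall f, f \in F -> emp_err Rw gamma x F (fhat x pi) pi <= emp_err Rw gamma x F f pi) ->
    (forall x, pihat x \in Pi /\
        forall pi, pi \in Pi -> Jf d0 (fhat x pi) pi <= Jf d0 (fhat x (pihat x)) (pihat x)) ->
    let Cmax := \big[Num.max/0]_(pi <- Pi) fine (conc_coef P d0 gamma pi dD) in
    \sum_(x : dataset S A n |
           all (fun pi_cp : {ffun S * A -> R} =>
              (Jret Rw P d0 gamma pi_cp - Jret Rw P d0 gamma (pihat x)
                <= c%:R * ((Rmax / (1 - gamma)) / (1 - gamma)) *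
                   Num.sqrt (Cmax * ln ((size F)%:R * (size Pi)%:R / delta) / n%:R))) Pi)
      data_prob P dD x
    >= 1 - delta.
Proof.
exists 32%N; split => //.
move=> R S A Rw Rmax P gamma d0 dD F Pi n delta HRw HP /andP [Hg0 Hg1] Hd0 HD _ _
  HF Hpol Hcl Hconc Hn /andP [Hd0' Hd1] fhat pihat Hfhat Hpihat.
cbv zeta.
set Cmax := \big[Num.max/0]_(pi <- Pi) _.
set V := Rmax / (1 - gamma).
have hp : 0 < 1 - gamma by lra.
have HV : Rmax = V * (1 - gamma) by rewrite /V mulfVK // lt0r_neq0.
have [sa0 _] : exists sa0 : S * A, true.
  case: (pickP (fun _ : S * A => true)) => [sa0 _|h]; first by exists sa0.
  by move: HD.2; rewrite big_pred0 // => /eqP; rewrite eq_sym oner_eq0.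
have HR0 : 0 <= Rmax by case/andP: (HRw sa0.1 sa0.2) => h1 h2; exact: le_trans h2.
have V0 : 0 <= V by rewrite /V divr_ge0 // ltW.
have hn : 0 < n%:R :> R by rewrite ltr0n.
have hsum1 : \sum_(x : dataset S A n) data_prob P dD x = 1.
  have e := @sum_ffun_prod R _ n (@wv R S A P dD).
  by rewrite (@sum_w R S A P dD HP HD) expr1n in e; exact: e.
have p0 : forall x : dataset S A n, 0 <= data_prob P dD x.
  move=> x; apply: prodr_ge0 => i _; apply: mulr_ge0; [exact: HD.1|exact: (HP _ _).1].
pose m := (size F)%:R * (size F)%:R * (size Pi)%:R : R.
pose L := ln (m / delta).
set L' := ln ((size F)%:R * (size Pi)%:R / delta).
pose T := [seq (p, h) | p <- [seq (pi, f) | pi <- Pi, f <- F], h <- F].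
pose Bad (e : {ffun S * A -> R} * {ffun S * A -> R} * {ffun S * A -> R}) (x : dataset S A n) :=
  \sum_i @Xv R S A Rw P gamma e.1.1 e.1.2 e.2 (x i) <
     n%:R * @muv R S A Rw P gamma e.1.1 e.1.2 e.2 dD / 2 - 16 * V ^+ 2 * L.
pose Good (x : dataset S A n) := all (fun e => ~~ Bad e x) T.
have hy : forall pi f, pi \in Pi -> f \in F -> forall z, 0 <= @yv R S A Rw gamma pi f z <= V.
  move=> pi f hpi hf z.
  have /andP [a1 a2] := @fpol_bound R S A f pi V (Hpol _ hpi) (HF _ hf) z.2.
  have /andP [b1 b2] := HRw z.1.1 z.1.2.
  have c1 : gamma * fpol f pi z.2 <= gamma * V by exact: ler_wpM2l.
  have c0 : 0 <= gamma * fpol f pi z.2 by exact: mulr_ge0.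
  rewrite /yv; apply/andP; split; first lra.
  rewrite HV in b2; lra.
have mpos : forall e, e \in T -> 1 <= m / delta.
  move=> e /allpairsP [[p h] [/allpairsP [[pi f] [hpi hf _]] hh _]].
  have s1 : (1 <= size F)%N by case: (F) hf.
  have s2 : (1 <= size Pi)%N by case: (Pi) hpi.
  rewrite ler_pdivlMr // mul1r.
  apply: (@le_trans _ _ 1); first exact: ltW.
  by rewrite /m -!natrM ler1n !muln_gt0 s1 s2.
have hbad : \sum_(x | ~~ Good x) data_prob P dD x <= delta.
  apply: le_trans (@union_bound R _ _ T Bad _ p0) _.
  have hb : forall e, e \in T -> \sum_(x | Bad e x) data_prob P dD x <= delta / m.
    move=> e he; have hm := mpos e he.
    move: he => /allpairsP [[p h] [/allpairsP [[pi f] [hpi hf ->]] hh ->]] /=.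
    have := @bad_prob R S A Rw P gamma pi f h dD HP HD V (HF _ hh)
       (HF _ (Hcl _ hpi _ hf)) (hy _ _ hpi hf) n L V0.
    have -> : expR (- L) = delta / m.
      rewrite expRN lnK ?invf_div // posrE; lra.
    by [].
  rewrite big_seq; apply: le_trans (ler_sum _ hb) _.
  rewrite -big_seq (@sum_const_seq R _ _ T).
  have hmT : m = (size T)%:R.
    rewrite /m -!natrM !size_allpairs; congr (_%:R).
    by rewrite [in LHS]mulnC mulnA.
  rewrite -hmT; have [->|hm0] := eqVneq m 0; first by rewrite mulr0; lra.
  by rewrite mulfVK //; lra.
have hclaim : forall x, Good x -> forall pi, pi \in Pi ->
    `|Jf d0 (fhat x pi) pi - Jret Rw P d0 gamma pi| <=
    (1 - gamma)^-1 * (16 * V * Num.sqrt (Cmax * L' / n%:R)).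
  move=> x hg pi hpi.
  have [hf hopt] := Hfhat x pi hpi.
  set f := fhat x pi in hf hopt *.
  have hpol := Hpol pi hpi.
  have hF0 : F != [::] by case: (F) hf.
  have [Q hQ hQfix] := @fixed_point R S A Rw P gamma pi F HP hpol Hg0 Hg1 hF0 (Hcl pi hpi).
  have hG := allP hg.
  have memT : forall g h, g \in F -> h \in F -> ((pi, g), h) \in T.
    move=> g h hg' hh; apply/allpairsP; exists ((pi, g), h); split => //.
    by apply/allpairsP; exists (pi, g).
  have sF : 1 <= (size F)%:R :> R by rewrite ler1n; case: (F) hf.
  have sPi : 1 <= (size Pi)%:R :> R by rewrite ler1n; case: (Pi) hpi.
  have hbd : 1 <= (size Pi)%:R / delta.
    rewrite ler_pdivlMr // mul1r; lra.
  have hy1 : (size F)%:R <= (size F)%:R * (size Pi)%:R / delta.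
    by rewrite -mulrA -[X in X <= _]mulr1 ler_wpM2l //; lra.
  have hy2 : 1 <= (size F)%:R * (size Pi)%:R / delta by lra.
  have L'0 : 0 <= L'.
    rewrite /L'; exact: ln_ge0.
  have hLL : L <= 2 * L'.
    have -> : L = ln ((size F)%:R) + L'.
      rewrite /L /L' -lnM ?posrE; try lra.
      by congr (ln _); rewrite /m -!mulrA.
    have : ln ((size F)%:R) <= L' by rewrite /L' ler_ln ?posrE //; lra.
    lra.
  have L0 : 0 <= L.
    have := ln_ge0 sF.
    have -> : L = ln ((size F)%:R) + L'.
      rewrite /L /L' -lnM ?posrE; try lra.
      by congr (ln _); rewrite /m -!mulrA.
    lra.
  set K := 16 * V ^+ 2 * L / n%:R.
  have K0 : 0 <= K by rewrite /K; apply: divr_ge0; [apply: mulr_ge0 => //; apply: mulr_ge0 => //; exact: sqr_ge0| exact: ltW].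
  have eK : forall mu : R, n%:R^-1 * (n%:R * mu / 2 - 16 * V ^+ 2 * L) = mu / 2 - K.
    by move=> mu; rewrite /K; field; rewrite lt0r_neq0.
  have hn1 : 0 <= n%:R^-1 :> R by rewrite invr_ge0 ltW.
  set mu := @muv R S A Rw P gamma pi f f dD.
  have mu0 : forall g h, 0 <= @muv R S A Rw P gamma pi g h dD.
    by move=> g h; apply: sumr_ge0 => sa _; apply: mulr_ge0; [exact: HD.1|exact: sqr_ge0].
  have nb1 := hG _ (memT f f hf hf).
  rewrite /Bad /= -leNgt in nb1.
  have e1 := @emp_diff R S A Rw P gamma pi f f n x.
  have h1 : n%:R^-1 * \sum_i @Xv R S A Rw P gamma pi f f (x i) <= emp_err Rw gamma x F f pi.
    rewrite -e1.
    exact: (@bigmax_seq_ge R _ F (fun g => emp_loss Rw gamma x f f pi - emp_loss Rw gamma x g f pi)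
              (bellman Rw P gamma pi f) (Hcl _ hpi _ hf)).
  have h2 : n%:R^-1 * (n%:R * mu / 2 - 16 * V ^+ 2 * L) <=
            n%:R^-1 * \sum_i @Xv R S A Rw P gamma pi f f (x i) by exact: ler_wpM2l.
  rewrite eK in h2.
  have h3 : emp_err Rw gamma x F Q pi <= K.
    apply: bigmax_seq_le => // g hg'.
    have nb2 := hG _ (memT Q g hQ hg').
    rewrite /Bad /= -leNgt in nb2.
    have e2 := @emp_diff R S A Rw P gamma pi Q g n x.
    rewrite hQfix in e2.
    have : emp_loss Rw gamma x Q Q pi - emp_loss Rw gamma x g Q pi =
           - (n%:R^-1 * \sum_i @Xv R S A Rw P gamma pi Q g (x i)) by rewrite -e2 opprB.
    move=> ->.
    have h4 : n%:R^-1 * (n%:R * @muv R S A Rw P gamma pi Q g dD / 2 - 16 * V ^+ 2 * L) <=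
            n%:R^-1 * \sum_i @Xv R S A Rw P gamma pi Q g (x i) by exact: ler_wpM2l.
    rewrite eK in h4.
    have := mu0 Q g; lra.
  have h5 := hopt Q hQ.
  have hmu : mu <= 4 * K by lra.
  apply: le_trans (@perf R S A Rw P d0 gamma pi dD HP Hd0 hpol Hg0 Hg1 HD.1 (Hconc pi hpi) f) _.
  apply: ler_wpM2l; first by rewrite invr_ge0 ltW.
  have [C0 _] := @conc_bound R S A P d0 gamma pi dD HD.1 (Hconc pi hpi).
  have hC : fine (conc_coef P d0 gamma pi dD) <= Cmax :=
    @bigmax_seq_ge R _ Pi (fun pi => fine (conc_coef P d0 gamma pi dD)) pi hpi.
  have Cm0 : 0 <= Cmax by exact: le_trans hC.
  have -> : 16 * V * Num.sqrt (Cmax * L' / n%:R) = Num.sqrt ((16 * V) ^+ 2 * (Cmax * L' / n%:R)).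
    rewrite (sqrtrM (Cmax * L' / n%:R) (sqr_ge0 (16 * V))) sqrtr_sqr ger0_norm //; apply: mulr_ge0 => //.
  rewrite ler_sqrt; last first.
    apply: mulr_ge0; first exact: sqr_ge0.
    apply: divr_ge0; [exact: mulr_ge0|exact: ltW].
  apply: (@le_trans _ _ (Cmax * (4 * K))).
    apply: ler_pM => //; exact: mu0.
  have -> : Cmax * (4 * K) = (V ^+ 2 * Cmax / n%:R) * (64 * L) by rewrite /K; ring.
  have -> : (16 * V) ^+ 2 * (Cmax * L' / n%:R) = (V ^+ 2 * Cmax / n%:R) * (256 * L') by ring.
  apply: ler_wpM2l; last lra.
  apply: divr_ge0; [apply: mulr_ge0 => //; exact: sqr_ge0|exact: ltW].
apply: (@le_trans _ _ (\sum_(x | Good x) data_prob P dD x)).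
  have hsplit := hsum1; rewrite (bigID Good) /= in hsplit.
  have hs : \sum_(x | Good x) data_prob P dD x = 1 - \sum_(x | ~~ Good x) data_prob P dD x.
    by rewrite -hsplit addrK.
  rewrite hs; lra.
rewrite [X in _ <= X]big_mkcond [X in X <= _]big_mkcond; apply: ler_sum => x _.
case hg: (Good x); last by case: ifP.
rewrite ifT //; apply/allP => pcp hpcp.
have [hpih hJ] := Hpihat x.
have c1 := hclaim x hg pcp hpcp.
have c2 := hclaim x hg (pihat x) hpih.
have c3 := hJ pcp hpcp.
rewrite ler_norml in c1; rewrite ler_norml in c2.
case/andP: c1 => c1a c1b; case/andP: c2 => c2a c2b.
set E := (1 - gamma)^-1 * (16 * V * Num.sqrt (Cmax * L' / n%:R)) in c1a c1b c2a c2b.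
have -> : 32%:R * (V / (1 - gamma)) * Num.sqrt (Cmax * L' / n%:R) = 2 * E by rewrite /E; ring.
lra.
Qed.
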